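(* Let $Q$ be a $\Sigma$-uniformized query with hypergraph $\mathcal{H}=(V,E)$, input size $n$, $p$ machines, let $\Delta>0$, let $\psi$ be the vector returned by Construct$(Q,\Delta)$, and let $\mathbf{v}=\mathbf{V}(\psi)/\Delta$ (a consistent vertex weight mapping). Let $\mathcal{U}=\{(U,R): R\in Q,\ U\subseteq\mathrm{vars}(R),\ U\text{ heavy in }R\}$, $H=H[\mathbf{v}]=\bigcup_{(U,R)\in\mathcal{U}}U$, and define the heavy relation $R_H=\bowtie_{(U,R)\in\mathcal{U}}\pi_U(R)$ (with variables $H$). Then for every $X\subseteq H$, $\deg_{R_H}(H\mid X)\le 2^{|H|}p^{\sum_{i\in H\setminus X}v_i}$.
   Context: A natural join query $Q$ is a set of relations (distinct schemas) with hypergraph $\mathcal{H}=(V,E)$, $V=\bigcup_R\mathrm{vars}(R)$, $E=\{\mathrm{vars}(R)\}$. $\mathcal{H}[S]$ has vertex set $S$ and edges $\{S\cap e: e\in E, S\cap e\ne\emptyset\}$; $\mathsf{red}$ removes every edge strictly contained in another. $\deg_R(Y\mid X)=\max_{\mathbf{x}}|\pi_Y\sigma_{X=\mathbf{x}}R|$. A constraint set for $R$ is $\sigma_R:\mathcal{P}(\mathrm{vars}(R))\to\mathbb{R}_{\ge0}$; $R$ satisfies it if $\deg_R(Y\mid X)\le2\sigma_R(X)/\sigma_R(Y)$ for all $X\subseteq Y\subseteq\mathrm{vars}(R)$; $Q$ is $\Sigma$-uniformized ($\Sigma=\{\sigma_R\}_{R\in Q}$) if each $R$ satisfies $\sigma_R$.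 A vertex weight mapping is $\mathbf{v}:V\to\mathbb{R}_{\ge0}$. For $R\in Q$ and $U\subseteq\mathrm{vars}(R)$: $U$ is heavy in $R$ if $\sigma_R(U)\ge n/p^{\sum_{i\in U}v_i}$, consistent if $\sigma_R(U)\le n/p^{\sum_{i\in U}v_i}$. $\mathbf{v}$ is consistent with $Q$ if every $U\subseteq\mathrm{vars}(R)$ is consistent in $R$ for every $R\in Q$. $H[\mathbf{v}]$ is the union of all sets $U$ heavy in some $R\in Q$. For each $U\subseteq V$ fix a minimum fractional vertex cover $\mathbf{v}^*_U$ of $\mathsf{red}(\mathcal{H}[U])$ (zero outside $U$). For $\psi=(\psi_U)_{U\in\mathcal{P}(V)}$, $\mathbf{V}(\psi)=\sum_U\psi_U\mathbf{v}^*_U$ and $|\psi|_1=\sum_U\psi_U$. Construct$(Q,\Delta)$: set $\psi\gets\mathbf{0}$; while $|\psi|_1<1$ and $H[\mathbf{V}(\psi)/\Delta]\ne V$: let $L=V\setminus H[\mathbf{V}(\psi)/\Delta]$ and set $\psi_L$ to the largest $\delta\in(0,1-|\psi|_1]$ such that $Q$ is consistent with $(\mathbf{V}(\psi)+\delta\mathbf{v}^*_L)/\Delta$; return $\psi$. *)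

(* Defs.v *)
From HB Require Import structures.
From mathcomp Require Import all_boot all_order all_algebra.
From mathcomp Require Import reals exp.
Set Implicit Arguments. Unset Strict Implicit. Unset Printing Implicit Defensive.
Import Order.TTheory GRing.Theory Num.Theory.
Local Open Scope ring_scope.

Section Defs.
Variables (V : finType) (D : eqType).

(* A tuple assigns values to (some) attributes; None = attribute absent. *)
Definition tuple := {ffun V -> option D}.

Definition relation := ({set V} * seq tuple)%type.
Definition rvars (R0 : relation) : {set V} := R0.1.
Definition rtuples (R0 : relation) : seq tuple := R0.2.

Definition wf_relation (R0 : relation) :=
  forall t, t \in rtuples R0 -> forall i, (t i != None) = (i \in rvars R0).

(* A query: a list of well-formed relations with pairwise distinct schemas,
   whose hypergraph has vertex set V = union of the schemas (V is the type). *)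
Definition is_query (Q : seq relation) :=
  [/\ uniq (map rvars Q), (forall R0, R0 \in Q -> wf_relation R0)
    & forall i : V, exists2 R0, R0 \in Q & i \in rvars R0].

Definition restr (Y : {set V}) (t : tuple) : tuple :=
  [ffun i => if i \in Y then t i else None].

Definition proj (Y : {set V}) (r : seq tuple) : seq tuple :=
  undup (map (restr Y) r).

Definition deg (r : seq tuple) (Y X : {set V}) : nat :=
  \max_(t <- r) size (proj Y [seq t' <- r | restr X t' == restr X t]).

Definition rsize (R0 : relation) : nat := size (undup (rtuples R0)).

Definition input_size (Q : seq relation) : nat := \sum_(R0 <- Q) rsize R0.

Definition compatible (t1 t2 : tuple) :=
  [forall i, [|| t1 i == None, t2 i == None | t1 i == t2 i]].
Definition merge (t1 t2 : tuple) : tuple :=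
  [ffun i => if t1 i is Some a then Some a else t2 i].
Definition join2 (r1 r2 : seq tuple) : seq tuple :=
  undup [seq merge t1 t2 | t1 <- r1, t2 <- [seq t2 <- r2 | compatible t1 t2]].
Definition join (rs : seq (seq tuple)) : seq tuple :=
  foldr join2 [:: [ffun => None]] rs.

Variable R : realType.

(* R satisfies the constraint set sigma_R (denominators cleared) *)
Definition satisfies (R0 : relation) (sR : {set V} -> R) :=
  (forall U : {set V}, U \subset rvars R0 -> 0 <= sR U) /\
  forall X Y : {set V}, X \subset Y -> Y \subset rvars R0 ->
    (deg (rtuples R0) Y X)%:R * sR Y <= 2 * sR X.

Definition uniformized (Q : seq relation) (sigma : relation -> {set V} -> R) :=
  forall R0, R0 \in Q -> satisfies R0 (sigma R0).

Section Weights.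
Variables (Q : seq relation) (sigma : relation -> {set V} -> R) (p : nat).

Definition wsum (v : V -> R) (U : {set V}) : R := \sum_(i in U) v i.

Definition threshold (v : V -> R) (U : {set V}) : R :=
  (input_size Q)%:R / (p%:R `^ wsum v U).

Definition heavy (v : V -> R) (R0 : relation) (U : {set V}) : bool :=
  threshold v U <= sigma R0 U.
Definition consistent_set (v : V -> R) (R0 : relation) (U : {set V}) :=
  sigma R0 U <= threshold v U.

Definition consistent (v : V -> R) :=
  (forall i, 0 <= v i) /\
  forall R0, R0 \in Q -> forall U : {set V}, U \subset rvars R0 -> consistent_set v R0 U.

Definition heavy_pairs (v : V -> R) : seq ({set V} * relation) :=
  [seq (U, R0) | R0 <- Q,
     U <- [seq U <- enum (powerset (rvars R0)) | heavy v R0 U ]].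

Definition heavy_set (v : V -> R) : {set V} :=
  \bigcup_(P <- heavy_pairs v) P.1.

Definition heavy_relation (v : V -> R) : seq tuple :=
  join [seq proj P.1 (rtuples P.2) | P <- heavy_pairs v].

Definition edges : {set {set V}} := [set e | e \in map rvars Q].
Definition induced (S : {set V}) : {set {set V}} :=
  [set S :&: e | e in edges & S :&: e != set0].
Definition red (F : {set {set V}}) : {set {set V}} :=
  [set f in F | ~~ [exists g in F, f \proper g]].

Definition frac_cover (F : {set {set V}}) (w : V -> R) :=
  (forall i, 0 <= w i) /\ forall f : {set V}, f \in F -> 1 <= \sum_(i in f) w i.
Definition min_frac_cover (S : {set V}) (F : {set {set V}}) (w : V -> R) :=
  frac_cover F w /\
  forall w', frac_cover F w' -> \sum_(i in S) w i <= \sum_(i in S) w' i.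

Definition vstar_spec (vstar : {set V} -> V -> R) :=
  forall U, min_frac_cover U (red (induced U)) (vstar U) /\
            forall i, i \notin U -> vstar U i = 0.

Variables (Delta : R) (vstar : {set V} -> V -> R).

Definition Vpsi (psi : {set V} -> R) : V -> R :=
  fun i => \sum_(U : {set V}) psi U * vstar U i.
Definition norm1 (psi : {set V} -> R) : R := \sum_(U : {set V}) psi U.
Definition scaled (psi : {set V} -> R) : V -> R := fun i => Vpsi psi i / Delta.

Definition loop_cond (psi : {set V} -> R) :=
  norm1 psi < 1 /\ heavy_set (scaled psi) != setT.

Definition light (psi : {set V} -> R) : {set V} := ~: heavy_set (scaled psi).

Definition largest_delta (psi : {set V} -> R) (delta : R) :=
  let ok d := [/\ 0 < d, d <= 1 - norm1 psi &
     consistent (fun i => (Vpsi psi i + d * vstar (light psi) i) / Delta)] in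
  ok delta /\ forall d, ok d -> d <= delta.

Definition update (psi : {set V} -> R) (L : {set V}) (d : R) : {set V} -> R :=
  fun U => if U == L then d else psi U.

(* Operational semantics of the while loop: run_from psi res means that the
   loop started in state psi terminates with returned value res. *)
Inductive run_from : ({set V} -> R) -> ({set V} -> R) -> Prop :=
| run_stop psi : ~ loop_cond psi -> run_from psi psi
| run_step psi delta res : loop_cond psi -> largest_delta psi delta ->
    run_from (update psi (light psi) delta) res -> run_from psi res.

Definition construct_returns (psi : {set V} -> R) := run_from (fun _ => 0) psi.

End Weights.
End Defs.

(* Main.v *)
Require Import Defs.
From HB Require Import structures.
From mathcomp Require Import all_boot all_order all_algebra.
From mathcomp Require Import reals exp.
Import Order.TTheory GRing.Theory Num.Theory.
Local Open Scope ring_scope.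

Lemma restr_restr (V : finType) (D : eqType) (A B : {set V}) (t : Defs.tuple V D) :
  restr A (restr B t) = restr (A :&: B) t.
Proof. by apply/ffunP => i; rewrite !ffunE inE; case: (i \in A); case: (i \in B). Qed.

Lemma restr_sub (V : finType) (D : eqType) (A B : {set V}) (t1 t2 : Defs.tuple V D) :
  A \subset B -> restr B t1 = restr B t2 -> restr A t1 = restr A t2.
Proof.
move=> sAB e; apply/ffunP => i; rewrite !ffunE.
case iA: (i \in A) => //.
move/ffunP: e => /(_ i); rewrite !ffunE (subsetP sAB i iA); exact.
Qed.

Lemma restr_U (V : finType) (D : eqType) (A B : {set V}) (t1 t2 : Defs.tuple V D) :
  restr A t1 = restr A t2 -> restr B t1 = restr B t2 ->
  restr (A :|: B) t1 = restr (A :|: B) t2.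
Proof.
move=> eA eB; apply/ffunP => i; rewrite !ffunE inE.
move/ffunP: eA => /(_ i); move/ffunP: eB => /(_ i).
rewrite !ffunE; case: (i \in A); case: (i \in B) => //=.
Qed.

Lemma proj_mem (V : finType) (D : eqType) (U : {set V}) (rt : seq (Defs.tuple V D)) u :
  u \in proj U rt -> exists2 r, r \in rt & u = restr U r.
Proof. by rewrite /proj mem_undup => /mapP. Qed.

Lemma proj_supp (V : finType) (D : eqType) (R0 : relation V D) (U : {set V}) u :
  wf_relation R0 -> U \subset rvars R0 -> u \in proj U (rtuples R0) ->
  forall i, (u i != None) = (i \in U).
Proof.
move=> wf sU /proj_mem [r rin ->] i; rewrite ffunE.
case iU: (i \in U) => //.
by rewrite (wf r rin) (subsetP sU i iU).
Qed.

Lemma restr_id (V : finType) (D : eqType) (U : {set V}) (u : Defs.tuple V D) :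
  (forall i, (u i != None) = (i \in U)) -> restr U u = u.
Proof.
move=> h; apply/ffunP => i; rewrite ffunE; case iU: (i \in U) => //.
by have := h i; rewrite iU; case: (u i).
Qed.

Arguments restr_sub {V D A B t1 t2}.
Arguments restr_U {V D A B t1 t2}.
Arguments proj_mem {V D U rt u}.
Arguments proj_supp {V D R0 U u}.
Arguments restr_id {V D U u}.

Lemma join_mem (V : finType) (D : eqType) (hp : seq ({set V} * relation V D)) t :
  (forall P, P \in hp -> wf_relation P.2 /\ P.1 \subset rvars P.2) ->
  t \in join [seq proj P.1 (rtuples P.2) | P <- hp] ->
  forall P, P \in hp -> restr P.1 t \in proj P.1 (rtuples P.2).
Proof.
elim: hp t => [|P0 hp IH] t hwf //=.
rewrite /join2 mem_undup => /allpairsPdep [t1 [t2 [t1in]]].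
rewrite mem_filter => /andP [ct t2in] ->.
have hwf' : forall P, P \in hp -> wf_relation P.2 /\ P.1 \subset rvars P.2.
  by move=> P Pin; apply: hwf; rewrite inE Pin orbT.
have IH' := IH t2 hwf' t2in.
have [wf0 s0] := hwf P0 (mem_head _ _).
have sup1 := proj_supp wf0 s0 t1in.
move=> P; rewrite inE => /orP [/eqP ->|Pin].
  suff -> : restr P0.1 (Defs.merge t1 t2) = t1 by [].
  apply/ffunP => i; rewrite !ffunE; have := sup1 i.
  case: (i \in P0.1); case: (t1 i) => //.
have [wfP sP] := hwf' P Pin.
have := IH' P Pin; set u := restr P.1 t2 => uin.
suff -> : restr P.1 (Defs.merge t1 t2) = u by [].
have supu := proj_supp wfP sP uin.
apply/ffunP => i; rewrite /u !ffunE.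
case iP: (i \in P.1) => //.
have := supu i; rewrite iP /u ffunE iP => t2i.
move/forallP: ct => /(_ i).
case: (t1 i) t2i => [a|]; case: (t2 i) => [b|] //= _.
by move=> /eqP [->].
Qed.
Lemma deg_heavy (R : realType) (V : finType) (D : eqType) (Q : seq (relation V D))
  (sigma : relation V D -> {set V} -> R) (p : nat) (v : V -> R)
  (R0 : relation V D) (U Y : {set V}) r0 :
  uniformized Q sigma -> (0 < p)%N -> consistent Q sigma p v -> R0 \in Q ->
  U \subset rvars R0 -> heavy Q sigma p v R0 U -> r0 \in rtuples R0 ->
  (deg (rtuples R0) U (U :&: Y))%:R <= 2 * p%:R `^ (\sum_(i in U :\: Y) v i).
Proof.
move=> unif p0 [_ cons] R0in sU hv r0in.
have npos : (0 < input_size Q)%N.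
  have : (0 < rsize R0)%N.
    rewrite /rsize; have : r0 \in undup (rtuples R0) by rewrite mem_undup.
    by case: (undup _).
  move/leq_trans; apply; rewrite /input_size (big_rem _ R0in) /=; exact: leq_addr.
set n : R := (input_size Q)%:R.
have n0 : 0 < n by rewrite ltr0n.
have P0 : 0 < p%:R :> R by rewrite ltr0n.
set a := \sum_(i in U :&: Y) v i; set b := \sum_(i in U :\: Y) v i.
have eU : wsum v U = a + b by rewrite /wsum (big_setID Y).
have Pa : 0 < p%:R `^ a :> R by apply: powR_gt0.
have Pb : 0 < p%:R `^ b :> R by apply: powR_gt0.
have hv' : n / (p%:R `^ a * p%:R `^ b) <= sigma R0 U.
  move: hv; rewrite /heavy /threshold eU powRD //.
  by apply/implyP => _; rewrite pnatr_eq0 -lt0n.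
have cs : sigma R0 (U :&: Y) <= n / p%:R `^ a.
  by have := cons R0 R0in (U :&: Y) (subset_trans (subsetIl _ _) sU).
have [_ sat] := unif R0 R0in.
have := sat (U :&: Y) U (subsetIl _ _) sU.
set d := (deg _ _ _)%:R => hd.
have d0 : 0 <= d by rewrite ler0n.
have : d * (n / (p%:R `^ a * p%:R `^ b)) <= 2 * (n / p%:R `^ a).
  apply: le_trans (ler_wpM2l d0 hv') _.
  apply: le_trans hd _; apply: ler_wpM2l => //.
set c := n / p%:R `^ a.
have c0 : 0 < c by apply: divr_gt0.
have -> : n / (p%:R `^ a * p%:R `^ b) = c / p%:R `^ b.
  by rewrite /c invfM mulrA.
rewrite mulrA ler_pdivrMr //.
by rewrite mulrAC ler_pM2r.

Qed.
Lemma hp_mem (R : realType) (V : finType) (D : eqType) (Q : seq (relation V D))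
  (sigma : relation V D -> {set V} -> R) (p : nat) (v : V -> R) P :
  P \in heavy_pairs Q sigma p v ->
  [/\ P.2 \in Q, P.1 \subset rvars P.2 & heavy Q sigma p v P.2 P.1].
Proof.
move=> /allpairsPdep [R0 [U [R0in]]]; rewrite mem_filter => /andP [hv].
by rewrite mem_enum powersetE => sU ->.
Qed.

Lemma cup_mem (V : finType) (T : eqType) (L : seq ({set V} * T)) i :
  i \in \bigcup_(P <- L) P.1 -> exists2 P, P \in L & i \in P.1.
Proof.
elim: L => [|P L IH]; first by rewrite big_nil inE.
rewrite big_cons inE => /orP [iP|/IH [P' P'in iP']].
  by exists P; rewrite ?mem_head.
by exists P' => //; rewrite inE P'in orbT.
Qed.

Lemma cup_sup (V : finType) (T : eqType) (L : seq ({set V} * T)) P :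
  P \in L -> P.1 \subset \bigcup_(P <- L) P.1.
Proof. by move=> Pin; rewrite (big_rem _ Pin) /= subsetUl. Qed.

Lemma sum_le_size (R : realType) (T : Type) (l : seq T) (F : T -> nat) (B : R) :
  (forall a, (F a)%:R <= B) -> (\sum_(a <- l) F a)%:R <= (size l)%:R * B.
Proof.
move=> h; elim: l => [|a l IH]; first by rewrite big_nil mul0r.
by rewrite big_cons /= natrD -addn1 natrD mulrDl mul1r addrC lerD.
Qed.

Arguments hp_mem {R V D Q sigma p v P}.
Arguments cup_mem {V T L i}.
Arguments cup_sup {V T L P}.
Arguments sum_le_size {R T l F B}.
Arguments deg_heavy {R V D Q sigma p v R0 U} Y {r0}.

Theorem lemma4p13 (R : realType) (V : finType) (D : eqType)
  (Q : seq (relation V D)) (sigma : relation V D -> {set V} -> R)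
  (p : nat) (Delta : R) (vstar : {set V} -> V -> R) (psi : {set V} -> R) :
  is_query Q ->
  uniformized Q sigma ->
  (0 < p)%N ->
  0 < Delta ->
  vstar_spec Q vstar ->
  construct_returns Q sigma p Delta vstar psi ->
  consistent Q sigma p (scaled Delta vstar psi) ->
  let v := scaled Delta vstar psi in
  let H := heavy_set Q sigma p v in
  forall X : {set V}, X \subset H ->
    (deg (heavy_relation Q sigma p v) H X)%:R
      <= 2 ^+ #|H| * (p%:R `^ (\sum_(i in H :\: X) v i)).
Proof.
move=> [_ Qwf _] unif p0 _ _ _ cons v H X sXH.
set RH := heavy_relation Q sigma p v.
set hp := heavy_pairs Q sigma p v.
have P0 : 0 < p%:R :> R by rewrite ltr0n.
have hwf : forall P, P \in hp -> wf_relation P.2 /\ P.1 \subset rvars P.2.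
  by move=> P /hp_mem [R0in sU _]; split => //; apply: Qwf.
have memRH : forall t, t \in RH -> forall P, P \in hp ->
    restr P.1 t \in proj P.1 (rtuples P.2).
  by move=> t tin; apply: join_mem.
have Bge0 : forall Y : {set V},
    0 <= 2 ^+ #|H :\: Y| * p%:R `^ (\sum_(i in H :\: Y) v i) :> R.
  by move=> Y; rewrite mulr_ge0 ?exprn_ge0 ?powR_ge0.
have base : forall (Y : {set V}) (s : seq (Defs.tuple V D)), H :\: Y = set0 ->
    (forall t1 t2, t1 \in s -> t2 \in s -> restr Y t1 = restr Y t2) ->
    (size (undup (map (restr H) s)))%:R <=
      2 ^+ #|H :\: Y| * p%:R `^ (\sum_(i in H :\: Y) v i) :> R.
  move=> Y s e hY; rewrite e big_set0 powRr0 cards0 expr0 mulr1.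
  case: s hY => [|t0 s] hY; first by rewrite /= ler01.
  have sHY : H \subset Y by rewrite -setD_eq0 e.
  rewrite -[X in _ <= X](mulr1n (1 : R)) ler_nat.
  apply: (@uniq_leq_size _ _ [:: restr H t0]); first exact: undup_uniq.
  move=> x; rewrite mem_undup => /mapP [t tin ->]; rewrite inE.
  by rewrite (restr_sub sHY (hY t t0 tin (mem_head _ _))).
have key : forall k (Y : {set V}) (s : seq (Defs.tuple V D)), (#|H :\: Y| <= k)%N -> {subset s <= RH} ->
    (forall t1 t2, t1 \in s -> t2 \in s -> restr Y t1 = restr Y t2) ->
    (size (undup (map (restr H) s)))%:R <=
      2 ^+ #|H :\: Y| * p%:R `^ (\sum_(i in H :\: Y) v i) :> R.
  elim=> [|k IH] Y s hk sRH hY.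
    by apply: base => //; apply: cards0_eq; apply/eqP; rewrite -leqn0.
  case: (set_0Vmem (H :\: Y)) => [e|[i iHY]]; first exact: base.
  move: (iHY); rewrite inE => /andP [iY iH].
  have [Pp Ppin iU] := cup_mem iH.
  have [R0in sU hv] := hp_mem Ppin.
  have sUH : Pp.1 \subset H := cup_sup Ppin.
  set U := Pp.1 in iU sU hv sUH; set R0 := Pp.2 in R0in sU hv.
  case: s sRH hY => [|t0 s'] sRH hY; first by rewrite /= Bge0.
  set s := t0 :: s' in sRH hY *.
  have t0in : t0 \in s by rewrite mem_head.
  have [r0 r0in e0] := proj_mem (memRH t0 (sRH t0 t0in) Pp Ppin).
  set Y' := Y :|: U.
  have hk' : (#|H :\: Y'| <= k)%N.
    rewrite -ltnS; apply: leq_trans hk; apply: proper_card; apply/properP; split.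
      by apply: setDS; apply: subsetUl.
    by exists i => //; rewrite !inE iU orbT.
  set l := undup (map (restr U) s).
  set ga := fun a => [seq t <- s | restr U t == a].
  set B' := 2 ^+ #|H :\: Y'| * p%:R `^ (\sum_(i in H :\: Y') v i) : R.
  have step1 : (size (undup (map (restr H) s)) <=
      \sum_(a <- l) size (undup (map (restr H) (ga a))))%N.
    have -> : \sum_(a <- l) size (undup (map (restr H) (ga a))) =
        size (flatten [seq undup (map (restr H) (ga a)) | a <- l]).
      by rewrite size_flatten /shape -map_comp sumnE big_map.
    apply: uniq_leq_size; first exact: undup_uniq.
    move=> x; rewrite mem_undup => /mapP [t tin ->].
    apply/flatten_mapP; exists (restr U t).
      by rewrite mem_undup; apply: map_f.
    by rewrite mem_undup; apply: map_f; rewrite mem_filter eqxx.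
  have step2 : forall a, (size (undup (map (restr H) (ga a))))%:R <= B'.
    move=> a; apply: IH => //.
      by move=> t; rewrite mem_filter => /andP [_ /sRH].
    move=> t1 t2; rewrite !mem_filter => /andP [/eqP e1 t1in] /andP [/eqP e2 t2in].
    by apply: restr_U; [apply: hY | rewrite e1 e2].
  have step4 : (size l <= deg (rtuples R0) U (U :&: Y))%N.
    have := @leq_bigmax_seq _ (rtuples R0) xpredT
      (fun t => size (proj U [seq t' <- rtuples R0 | restr (U :&: Y) t' == restr (U :&: Y) t]))
      r0 r0in isT.
    rewrite /deg; apply: leq_trans.
    apply: uniq_leq_size; first exact: undup_uniq.
    move=> x; rewrite mem_undup => /mapP [t tin ->].
    have [r rin er] := proj_mem (memRH t (sRH t tin) Pp Ppin).
    rewrite mem_undup; apply/mapP; exists r => //.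
    rewrite mem_filter rin andbT; apply/eqP.
    rewrite -(restr_sub (subsetIl U Y) er) (restr_sub (subsetIr U Y) (hY t t0 tin t0in)).
    exact: (restr_sub (subsetIl U Y) e0).
  have step5 := deg_heavy Y unif p0 cons R0in sU hv r0in.
  set b := \sum_(i in U :\: Y) v i in step5.
  have ew : \sum_(i in H :\: Y) v i = b + \sum_(i in H :\: Y') v i.
    rewrite (big_setID U); congr (_ + _); apply: eq_bigl => j; rewrite !inE;
    have := subsetP sUH j; case: (j \in U); case: (j \in Y); case: (j \in H) => //;
    by move=> /(_ isT).
  apply: le_trans (_ : _ <= (\sum_(a <- l) size (undup (map (restr H) (ga a))))%:R) _.
    by rewrite ler_nat.
  apply: le_trans (sum_le_size step2) _.
  apply: le_trans (_ : (2 * p%:R `^ b) * B' <= _).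
    apply: ler_wpM2r; first exact: Bge0.
    by apply: le_trans step5; rewrite ler_nat.
  rewrite ew powRD; last by apply/implyP => _; rewrite pnatr_eq0 -lt0n.
  rewrite /B' mulrACA -exprS; apply: ler_wpM2r; first by rewrite mulr_ge0 ?powR_ge0.
  by rewrite ler_eXn2l ?ltr1n //; apply: proper_card; apply/properP; split;
    [apply: setDS; apply: subsetUl | exists i => //; rewrite !inE iU orbT].
rewrite /deg; elim/big_rec: _ => [|t k _ IHk].
  by rewrite mulr_ge0 ?exprn_ge0 ?powR_ge0.
have B1 : (size (proj H [seq t' <- RH | restr X t' == restr X t]))%:R <=
    2 ^+ #|H| * p%:R `^ (\sum_(i in H :\: X) v i) :> R.
  apply: le_trans (key _ X _ (leqnn _) _ _) _.
  - by move=> t'; rewrite mem_filter => /andP [].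
  - by move=> t1 t2; rewrite !mem_filter => /andP [/eqP -> _] /andP [/eqP -> _].
  apply: ler_wpM2r; first exact: powR_ge0.
  by rewrite ler_eXn2l ?ltr1n //; apply: subset_leq_card; apply: subsetDl.
by rewrite /maxn; case: ifP.
Qed.
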